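(* Let $n\ge2$, and let $\mathcal K\subseteq\mathbb C^n$ be a subset such that for every $V\in\mathcal Z_n$ the set $\mathcal K\cap P^{-1}(V)$ has exactly one element. Then $\mathcal K$ is not closed in $(\mathbb C^n,d_\infty)$.
   Context: $\mathcal Z_n$ denotes the family of all multisets of complex numbers with exactly $n$ elements counted with multiplicity. $\mathbb C^n$ carries the metric $d_\infty(\mathbf u,\mathbf v)=\max_j|u_j-v_j|$. The map $P:\mathbb C^n\to\mathcal Z_n$ sends $(v_1,\dots,v_n)$ to the multiset $\{v_1,\dots,v_n\}$ (with multiplicities); thus the hypothesis says $\mathcal K$ contains exactly one ordering of each multiset of $n$ complex numbers. *)

(* Defs.v *)
From Stdlib Require Import Reals List Permutation.
From Coquelicot Require Import Coquelicot.
Open Scope R_scope.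

Definition vec (n : nat) (u : list C) : Prop := length u = n.

(* d_infty(u,v) < eps : all coordinatewise distances are < eps
   (for lists of equal length, this is max_j |u_j - v_j| < eps). *)
Definition dinf_lt (u v : list C) (eps : R) : Prop :=
  Forall2 (fun a b => Cmod (a - b) < eps) u v.

(* P u = P v  (same multiset of entries, with multiplicity) *)
Definition sameP (u v : list C) : Prop := Permutation u v.

Definition closed_dinf (n : nat) (K : list C -> Prop) : Prop :=
  forall x, vec n x ->
    (forall eps, 0 < eps -> exists y, K y /\ dinf_lt x y eps) -> K x.

(* Main.v *)
Require Import Defs.
From Stdlib Require Import Reals List Permutation Lra Lia Classical ClassicalEpsilon.
From Coquelicot Require Import Coquelicot.
Open Scope R_scope.

Fixpoint insert_all {A} (x : A) (l : list A) : list (list A) :=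
  match l with
  | nil => (x :: nil) :: nil
  | y :: l' => (x :: y :: l') :: map (cons y) (insert_all x l')
  end.

Fixpoint perms {A} (l : list A) : list (list A) :=
  match l with
  | nil => nil :: nil
  | x :: l' => flat_map (insert_all x) (perms l')
  end.

Lemma insert_all_in {A} (x : A) l1 l2 : In (l1 ++ x :: l2) (insert_all x (l1 ++ l2)).
Proof.
  induction l1 as [|y l1 IH]; simpl.
  - destruct l2; simpl; auto.
  - right. apply in_map. exact IH.
Qed.

Lemma insert_all_perm {A} (x : A) l w : In w (insert_all x l) -> Permutation (x :: l) w.
Proof.
  revert w; induction l as [|y l IH]; simpl; intros w H.
  - destruct H as [<-|[]]. auto.
  - destruct H as [<-|H]; auto.
    apply in_map_iff in H. destruct H as [w' [<- Hw']].
    apply IH in Hw'. eapply perm_trans. apply perm_swap. constructor. auto.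
Qed.

Lemma perms_complete {A} (l w : list A) : Permutation l w -> In w (perms l).
Proof.
  revert w; induction l as [|x l IH]; intros w H.
  - apply Permutation_nil in H. subst. simpl. auto.
  - assert (Hin : In x w) by (eapply Permutation_in; eauto; simpl; auto).
    apply in_split in Hin. destruct Hin as [l1 [l2 ->]].
    apply Permutation_cons_app_inv in H.
    simpl. apply in_flat_map. exists (l1 ++ l2). split; auto.
    apply insert_all_in.
Qed.

Lemma perms_sound {A} (l w : list A) : In w (perms l) -> Permutation l w.
Proof.
  revert w; induction l as [|x l IH]; simpl; intros w H.
  - destruct H as [<-|[]]; auto.
  - apply in_flat_map in H. destruct H as [v [Hv Hw]].
    apply insert_all_perm in Hw. eapply perm_trans; [|exact Hw]. constructor. auto.
Qed.

Lemma pig {A} (P : R -> R -> Prop) (g : R -> A) (L : list A) :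
  (forall s d d', P s d -> d <= d' -> P s d') ->
  (forall d, 0 < d -> exists s, P s d /\ In (g s) L) ->
  exists w, In w L /\ forall d, 0 < d -> exists s, P s d /\ g s = w.
Proof.
  intros Hmon. induction L as [|w0 L IH]; intros H.
  - destruct (H 1 Rlt_0_1) as [s [_ []]].
  - destruct (classic (forall d, 0 < d -> exists s, P s d /\ g s = w0)) as [Hy|Hn].
    + exists w0. simpl; auto.
    + apply not_all_ex_not in Hn. destruct Hn as [d0 Hd0].
      apply imply_to_and in Hd0. destruct Hd0 as [Hd0 Hne].
      destruct IH as [w [Hw Hw']].
      * intros d Hd. destruct (H (Rmin d d0)) as [s [Hs Hin]].
        { apply Rmin_pos; auto. }
        exists s. split. eapply Hmon; eauto. apply Rmin_l.
        destruct Hin as [Heq|Hin]; auto.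
        exfalso. apply Hne. exists s. split; auto. eapply Hmon; eauto. apply Rmin_r.
      * exists w. simpl; auto.
Qed.

Definition apath (t : R) : C :=
  if Rle_dec t 1 then (1 - t, t) else (1 - t, 2 - t).

Lemma apath_nz t : apath t <> RtoC 0.
Proof.
  unfold apath, RtoC. destruct (Rle_dec t 1); intro H; injection H; intros; lra.
Qed.

Lemma sqrt2_le : sqrt 2 <= 2.
Proof.
  replace 2 with (sqrt (2*2)) at 2 by (rewrite sqrt_square; lra).
  apply sqrt_le_1_alt. lra.
Qed.

Lemma apath_lip m s : Cmod (Cminus (apath m) (apath s)) <= 2 * Rabs (m - s).
Proof.
  eapply Rle_trans. apply Cmod_2Rmax.
  assert (Hm : Rmax (Rabs (fst (Cminus (apath m) (apath s))))
                    (Rabs (snd (Cminus (apath m) (apath s)))) <= Rabs (m - s)).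
  { unfold apath; destruct (Rle_dec m 1); destruct (Rle_dec s 1); simpl;
    apply Rmax_lub; unfold Rabs; repeat destruct Rcase_abs; lra. }
  assert (0 <= Rabs (m - s)) by apply Rabs_pos.
  pose proof sqrt2_le. pose proof (sqrt_pos 2).
  assert (0 <= Rmax (Rabs (fst (Cminus (apath m) (apath s))))
                    (Rabs (snd (Cminus (apath m) (apath s))))).
  { eapply Rle_trans; [apply Rabs_pos|apply Rmax_l]. }
  nra.
Qed.

Definition Vl (n : nat) (x : C) : list C := x :: Copp x :: repeat (RtoC 0) (n - 2).

Lemma Vl_len n x : (2 <= n)%nat -> vec n (Vl n x).
Proof. intros. unfold vec, Vl. simpl. rewrite repeat_length. lia. Qed.

Lemma map_Vl n c x : map (fun z => Cmult c z) (Vl n x) = Vl n (Cmult c x).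
Proof.
  unfold Vl. simpl. f_equal. f_equal. field. 
  induction (n - 2)%nat; simpl; auto. f_equal; auto. field.
Qed.

Lemma in_Vl n x z : In z (Vl n x) -> z = x \/ z = Copp x \/ z = RtoC 0.
Proof.
  unfold Vl. simpl. intros [H|[H|H]]; auto. apply repeat_spec in H. auto.
Qed.

Lemma nth_map_mul c l p : nth p (map (fun z => Cmult c z) l) (RtoC 0) = Cmult c (nth p l (RtoC 0)).
Proof.
  revert p; induction l; intros [|p]; simpl; auto; field.
Qed.

Lemma Forall2_map_l (P : C -> C -> Prop) f l :
  (forall z, In z l -> P (f z) z) -> Forall2 P (map f l) l.
Proof.
  induction l; simpl; intros H; constructor; auto.
Qed.

Theorem theorem4p2 (n : nat) (K : list C -> Prop) :
  (2 <= n)%nat ->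
  (forall u, K u -> vec n u) ->
  (forall V, vec n V ->
     exists u, (K u /\ sameP u V) /\
       forall w, K w -> sameP w V -> w = u) ->
  ~ closed_dinf n K.
Proof.
  intros Hn HKv H3 Hcl.
  assert (Huniq : forall x w1 w2, K w1 -> K w2 -> Permutation w1 (Vl n x) ->
                    Permutation w2 (Vl n x) -> w1 = w2).
  { intros x w1 w2 K1 K2 P1 P2. destruct (H3 (Vl n x) (Vl_len n x Hn)) as [u0 [_ Hu0]].
    rewrite (Hu0 w1), (Hu0 w2); auto. }
  set (u := fun t => proj1_sig (constructive_indefinite_description _
                       (H3 (Vl n (apath t)) (Vl_len n (apath t) Hn)))).
  assert (Hu : forall t, K (u t) /\ Permutation (u t) (Vl n (apath t))).
  { intro t. unfold u. destruct (constructive_indefinite_description _ _) as [x Hx]. simpl. destruct Hx as [[A B] _].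
    auto. }
  clearbody u.
  assert (LIM : forall (B : R -> Prop) m,
     (forall d, 0 < d -> exists s, 0 <= s <= 2 /\ Rabs (s - m) < d /\ B s) ->
     exists s, B s /\ u m = map (fun z => Cmult (Cdiv (apath m) (apath s)) z) (u s)).
  { intros B m HB.
    set (g := fun s => map (fun z => Cmult (Cdiv (apath m) (apath s)) z) (u s)).
    destruct (pig (fun s d => 0 <= s <= 2 /\ Rabs (s - m) < d /\ B s) g
                (perms (Vl n (apath m)))) as [w [Hw Hw']].
    - intros s d d' [? [? ?]] ?. repeat split; auto; lra.
    - intros d Hd. destruct (HB d Hd) as [s Hs]. exists s. split; auto.
      apply perms_complete. apply Permutation_sym. unfold g.
      eapply perm_trans. apply Permutation_map. apply (proj2 (Hu s)).
      rewrite map_Vl. replace (Cmult (Cdiv (apath m) (apath s)) (apath s)) with (apath m).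
      auto. field. apply apath_nz.
    - apply perms_sound in Hw.
      assert (Kw : K w).
      { apply Hcl.
        - unfold vec. rewrite <- (Permutation_length Hw). apply Vl_len; auto.
        - intros eps Heps. destruct (Hw' (eps / 2)) as [s [[_ [Hsm _]] Hgs]]. lra.
          exists (u s). split. apply Hu. rewrite <- Hgs. unfold g, dinf_lt.
          apply Forall2_map_l. intros z Hz.
          eapply Permutation_in in Hz; [|apply (proj2 (Hu s))].
          pose proof (apath_lip m s) as Hl. rewrite Rabs_minus_sym in Hsm.
          pose proof (apath_nz s).
          apply in_Vl in Hz. destruct Hz as [ -> | [ -> | -> ] ].
          + replace (Cminus (Cmult (Cdiv (apath m) (apath s)) (apath s)) (apath s))
              with (Cminus (apath m) (apath s)) by (field; auto). lra.
          + replace (Cminus (Cmult (Cdiv (apath m) (apath s)) (Copp (apath s))) (Copp (apath s)))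
              with (Copp (Cminus (apath m) (apath s))) by (field; auto).
            rewrite Cmod_opp. lra.
          + replace (Cminus (Cmult (Cdiv (apath m) (apath s)) (RtoC 0)) (RtoC 0))
              with (RtoC 0) by (field; auto). rewrite Cmod_0. lra. }
      assert (Ew : w = u m).
      { apply (Huniq (apath m)); [exact Kw | apply Hu | apply Permutation_sym; exact Hw | apply Hu]. }
      destruct (Hw' 1 Rlt_0_1) as [s [[_ [_ Bs]] Hgs]].
      exists s. split; auto. rewrite <- Ew, <- Hgs. reflexivity. }
  set (Q := fun t p => nth p (u t) (RtoC 0) = apath t).
  assert (CLO : forall m p, (forall d, 0 < d -> exists s, 0 <= s <= 2 /\ Rabs (s - m) < d /\ Q s p) ->
                 Q m p).
  { intros m p H. destruct (LIM _ m H) as [s [Qs E]]. unfold Q in *.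
    rewrite E, nth_map_mul, Qs. field. apply apath_nz. }
  assert (LC : forall m p, Q m p -> exists d, 0 < d /\ forall s, 0 <= s <= 2 -> Rabs (s - m) < d -> Q s p).
  { intros m p Qm. apply NNPP. intro Hn'.
    assert (H : forall d, 0 < d -> exists s, 0 <= s <= 2 /\ Rabs (s - m) < d /\ ~ Q s p).
    { intros d Hd. apply NNPP. intro Hc. apply Hn'. exists d. split; auto.
      intros s Hs Hsm. apply NNPP. intro HQ. apply Hc. exists s. auto. }
    destruct (LIM _ m H) as [s [nQs E]]. apply nQs. unfold Q in *.
    rewrite E, nth_map_mul in Qm.
    pose proof (apath_nz s). pose proof (apath_nz m).
    assert (Hc : Cdiv (apath m) (apath s) <> RtoC 0).
    { intro Hc. apply H1. replace (apath m) with (Cmult (Cdiv (apath m) (apath s)) (apath s))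
        by (field; auto). rewrite Hc. field. }
    replace (nth p (u s) (RtoC 0)) with
      (Cmult (Cinv (Cdiv (apath m) (apath s))) (Cmult (Cdiv (apath m) (apath s)) (nth p (u s) (RtoC 0))))
      by (field; auto).
    rewrite Qm. field. auto. }
  destruct (In_nth (u 0) (apath 0) (RtoC 0)) as [p0 [_ Q0]].
  { eapply Permutation_in. apply Permutation_sym, (proj2 (Hu 0)). simpl. auto. }
  fold (Q 0 p0) in Q0.
  set (E := fun t => 0 <= t <= 2 /\ forall s, 0 <= s <= t -> Q s p0).
  destruct (completeness E) as [m [Hub Hlub]].
  { exists 2. intros x [Hx _]. lra. }
  { exists 0. split. lra. intros s Hs. replace s with 0 by lra. auto. }
  assert (m0 : 0 <= m). { apply Hub. split. lra. intros s Hs. replace s with 0 by lra. auto. }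
  assert (m2 : m <= 2). { apply Hlub. intros x [Hx _]. lra. }
  assert (Hbelow : forall s, 0 <= s < m -> Q s p0).
  { intros s Hs. apply NNPP. intro Hns.
    assert (m <= s). { apply Hlub. intros x [Hx Hx']. destruct (Rle_lt_dec x s); auto.
      exfalso. apply Hns. apply Hx'. lra. }
    lra. }
  assert (Qm : Q m p0).
  { apply CLO. intros d Hd. destruct (Rle_lt_dec m 0).
    - exists m. split; [lra|split].
      + rewrite Rminus_diag, Rabs_R0. auto.
      + replace m with 0 by lra. auto.
    - exists (Rmax 0 (m - d/2)). set (s := Rmax 0 (m - d/2)).
      assert (0 <= s) by (unfold s; apply Rmax_l). assert (m - d/2 <= s) by (unfold s; apply Rmax_r).
      assert (s < m). { unfold s. apply Rmax_lub_lt; lra. }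
      repeat split; try lra. rewrite Rabs_left by lra. lra.
      apply Hbelow; lra. }
  assert (m2' : m = 2).
  { destruct (Rle_lt_dec 2 m); [lra|]. exfalso.
    destruct (LC m p0 Qm) as [d [Hd Hd']].
    set (t := Rmin (m + d/2) 2).
    assert (t <= m + d/2) by (unfold t; apply Rmin_l). assert (t <= 2) by (unfold t; apply Rmin_r).
    assert (m < t). { unfold t. apply Rmin_glb_lt; lra. }
    assert (E t). { split. lra. intros s Hs. destruct (Rlt_le_dec s m).
      apply Hbelow; lra. apply Hd'. lra. rewrite Rabs_right by lra. lra. }
    assert (t <= m) by (apply Hub; auto). lra. }
  subst m.
  assert (E02 : u 2 = u 0).
  { apply (Huniq (apath 0)). apply Hu. apply Hu.
    eapply perm_trans. apply Hu. unfold Vl.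
    replace (apath 2) with (Copp (apath 0)).
    replace (Copp (Copp (apath 0))) with (apath 0) by (field).
    apply perm_swap.
    unfold apath. destruct (Rle_dec 2 1); [lra|]. destruct (Rle_dec 0 1); [|lra].
    unfold Copp. simpl. f_equal; lra.
    apply Hu. }
  unfold Q in Qm, Q0. rewrite E02, Q0 in Qm.
  unfold apath in Qm. destruct (Rle_dec 0 1); [|lra]. destruct (Rle_dec 2 1); [lra|].
  injection Qm. lra.
Qed.
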